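(* Let $A\in\mathbb{R}^{m\times n}$ with $AA^{\top}$ invertible, let $0<x_{\min}\le x_{\max}$, and let $\boldsymbol x_o,\hat{\boldsymbol x},\tilde{\boldsymbol x}\in\mathbb{R}^n$ have all entries in $[x_{\min},x_{\max}]$. Put $X_o=\mathrm{diag}(\boldsymbol x_o)$, $\hat X=\mathrm{diag}(\hat{\boldsymbol x})$, $\tilde X=\mathrm{diag}(\tilde{\boldsymbol x})$, $\Sigma_o=(AX_o^2A^{\top})^{-1}$, $\hat\Sigma=(A\hat X^2A^{\top})^{-1}$, $\tilde\Sigma=(A\tilde X^2A^{\top})^{-1}$. Then every eigenvalue $\lambda_i$ of $\Sigma_o^{-1/2}(\hat\Sigma-\tilde\Sigma)\Sigma_o^{-1/2}$ satisfies $$|\lambda_i|\le \frac{x_{\max}^2\,\lambda_{\max}^2(AA^{\top})\,\|\hat{\boldsymbol x}^2-\tilde{\boldsymbol x}^2\|_\infty}{x_{\min}^4\,\lambda_{\min}^2(AA^{\top})}.$$ Furthermore, for any $\sigma_w>0$ and any vectors $\boldsymbol w_1,\dots,\boldsymbol w_L\in\mathbb{R}^n$, with $\boldsymbol y_\ell=AX_o\boldsymbol w_\ell$, $$\Big|\frac1{L\sigma_w^2}\sum_{\ell=1}^L\boldsymbol y_\ell^{\top}(\hat\Sigma-\tilde\Sigma)\boldsymbol y_\ell\Big|\le \frac{x_{\max}^2\,\lambda_{\max}^2(AA^{\top})\,\|\hat{\boldsymbol x}^2-\tilde{\boldsymbol x}^2\|_\infty}{x_{\min}^4\,\lambda_{\min}^2(AA^{\top})}\Big(1+\frac1{L\sigma_w^2}\sum_{\ell=1}^L\boldsymbol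 w_\ell^{\top}\boldsymbol w_\ell\Big).$$
   Context: For a vector $\boldsymbol x$, $\boldsymbol x^2$ denotes the entrywise square; $\lambda_{\max},\lambda_{\min}$ denote largest and smallest eigenvalues; $\Sigma_o^{-1/2}$ is the symmetric square root of $\Sigma_o^{-1}=AX_o^2A^{\top}$ inverted appropriately (i.e. $(AX_o^2A^{\top})^{1/2}$). *)

(* Defs.v *)
From mathcomp Require Import all_boot all_order all_algebra.
From mathcomp Require Import reals.
Set Implicit Arguments. Unset Strict Implicit. Unset Printing Implicit Defensive.
Import Order.TTheory GRing.Theory Num.Theory.
Local Open Scope ring_scope.

Section Defs.
Variable R : realType.

Definition diagv n (x : 'cV[R]_n) : 'M[R]_n := diag_mx x^T.

Definition sqv n (x : 'cV[R]_n) : 'cV[R]_n := \col_i (x i 0 ^+ 2).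

Definition inftynorm n (x : 'cV[R]_n) : R := \big[Num.max/0]_(i < n) `|x i 0|.

Definition qform m (M : 'M[R]_m) (y : 'cV[R]_m) : R := (y^T *m M *m y) 0 0.

Definition psd m (M : 'M[R]_m) : Prop := forall v : 'cV[R]_m, 0 <= qform M v.

Definition is_lmax m (M : 'M[R]_m) (lam : R) : Prop :=
  eigenvalue M lam /\ forall a, eigenvalue M a -> a <= lam.
Definition is_lmin m (M : 'M[R]_m) (lam : R) : Prop :=
  eigenvalue M lam /\ forall a, eigenvalue M a -> lam <= a.

Definition Sigma m n (A : 'M[R]_(m, n)) (x : 'cV[R]_n) : 'M[R]_m :=
  invmx (A *m diagv x *m diagv x *m A^T).
End Defs.

(* Main.v *)
Require Import Defs.
From mathcomp Require Import all_boot all_order all_algebra.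
From mathcomp Require Import reals.
From mathcomp Require Import complex.
From mathcomp Require Import ring lra.
Set Implicit Arguments. Unset Strict Implicit. Unset Printing Implicit Defensive.
Import Order.TTheory GRing.Theory Num.Theory.
Local Open Scope ring_scope.
Section Aux.
Variable R : realType.

Definition nrm k (u : 'rV[R]_k) := (u *m u^T) 0 0.

Lemma dotE k (u v : 'rV[R]_k) : (u *m v^T) 0 0 = \sum_j u 0 j * v 0 j.
Proof. by rewrite mxE; apply: eq_bigr => j _; rewrite mxE. Qed.

Lemma nrmE k (u : 'rV[R]_k) : nrm u = \sum_j u 0 j ^+ 2.
Proof. by rewrite /nrm dotE; apply: eq_bigr => j _; rewrite expr2. Qed.

Lemma nrm_ge0 k (u : 'rV[R]_k) : 0 <= nrm u.
Proof. by rewrite nrmE; apply: sumr_ge0 => j _; exact: sqr_ge0. Qed.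

Lemma nrm_gt0 k (u : 'rV[R]_k) : u != 0 -> 0 < nrm u.
Proof.
move=> un0; rewrite lt_def nrm_ge0 andbT; apply/eqP => h.
move: un0; rewrite nrmE in h; have := psumr_eq0P (fun j _ => sqr_ge0 (u 0 j)) h.
move=> H; case/eqP; apply/matrixP => i j; rewrite ord1 mxE.
by apply/eqP; rewrite -sqrf_eq0; apply/eqP; exact: H.
Qed.

Lemma dotC k (u v : 'rV[R]_k) : (u *m v^T) 0 0 = (v *m u^T) 0 0.
Proof. by rewrite !dotE; apply: eq_bigr => j _; rewrite mulrC. Qed.

Lemma amgm_sc (t x y : R) : 0 < t -> 2 * (x * y) <= t * x ^+ 2 + y ^+ 2 / t.
Proof.
move=> t0; rewrite -subr_ge0.
have -> : t * x ^+ 2 + y ^+ 2 / t - 2 * (x * y) = (t * x - y) ^+ 2 / t.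
  by field; rewrite gt_eqF.
by apply: divr_ge0; [exact: sqr_ge0 | exact: ltW].
Qed.

Lemma amgm k (t : R) (u v : 'rV[R]_k) : 0 < t ->
  2 * (u *m v^T) 0 0 <= t * nrm u + nrm v / t.
Proof.
move=> t0; rewrite dotE !nrmE mulr_sumr mulr_sumr mulr_suml -big_split /=.
by apply: ler_sum => j _; exact: amgm_sc.
Qed.

Lemma quad_diag n (a b : 'rV[R]_n) (x : 'cV[R]_n) :
  (a *m diagv x *m diagv x *m b^T) 0 0 = \sum_j a 0 j * x j 0 ^+ 2 * b 0 j.
Proof.
rewrite /diagv !mul_mx_diag mxE; apply: eq_bigr => j _.
by rewrite !mxE expr2 !mulrA.
Qed.

Lemma quadA m n (A : 'M[R]_(m, n)) (p q : 'rV[R]_m) (x : 'cV[R]_n) :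
  (p *m (A *m diagv x *m diagv x *m A^T) *m q^T) 0 0
  = \sum_j (p *m A) 0 j * x j 0 ^+ 2 * (q *m A) 0 j.
Proof. by rewrite -quad_diag trmx_mul !mulmxA. Qed.

Lemma nrmA m n (A : 'M[R]_(m, n)) (p : 'rV[R]_m) :
  nrm (p *m A) = (p *m (A *m A^T) *m p^T) 0 0.
Proof. by rewrite /nrm trmx_mul !mulmxA. Qed.

End Aux.

Section Aux2.
Variable R : realType.

Lemma bil_bound n (a b : 'rV[R]_n) (e : 'I_n -> R) (dl : R) :
  (forall j, `|e j| <= dl) ->
  `|\sum_j a 0 j * e j * b 0 j| <= dl / 2 * (nrm a + nrm b).
Proof.
move=> he; apply: le_trans (ler_norm_sum _ _ _) _.
rewrite !nrmE mulrDr !mulr_sumr -big_split /=; apply: ler_sum => j _.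
have d0 : 0 <= dl by apply: le_trans (he j); exact: normr_ge0.
have h1 := amgm_sc `|a 0 j| `|b 0 j| ltr01.
rewrite invr1 mulr1 mul1r !real_normK ?num_real // in h1.
rewrite !normrM.
have h2 : `|e j| * (`|a 0 j| * `|b 0 j|) <= dl * (`|a 0 j| * `|b 0 j|).
  by apply: ler_wpM2r => //; apply: mulr_ge0; exact: normr_ge0.
apply: le_trans (_ : dl * (`|a 0 j| * `|b 0 j|) <= _).
  by apply: le_trans h2; rewrite le_eqVlt; apply/orP; left; apply/eqP; ring.
rewrite -mulrDr -mulrA; apply: ler_wpM2l => //.
by rewrite [2^-1 * _]mulrC ler_pdivlMr // mulrC.
Qed.

End Aux2.

Lemma diag_quad_le (C : numClosedFieldType) n (z d : 'rV[C]_n) (h : C) :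
  (forall j, d 0 j <= h) ->
  (z *m diag_mx d *m map_mx Num.conj z^T) 0 0 <= h * (z *m map_mx Num.conj z^T) 0 0.
Proof.
move=> hd; rewrite mul_mx_diag !mxE mulr_sumr; apply: ler_sum => j _.
rewrite !mxE mulrAC [h * _]mulrC; apply: ler_wpM2l; first exact: mul_conjC_ge0.
exact: hd.
Qed.

Section Ray.
Variable R : realType.
Local Notation C := (R[i]).
Local Notation f := (real_complex R).

Lemma fR_real (x : R) : (f x : C) \is Num.real.
Proof.
rewrite realE; case: (lerP 0 x) => hx.
  by rewrite /= -[0 : C]/(f 0) !lecR hx.
by rewrite /= -[0 : C]/(f 0) !lecR (ltW hx) orbT.
Qed.

Lemma fR_conj (x : R) : Num.conj (f x : C) = f x.
Proof. exact/CrealP/fR_real. Qed.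

Lemma real_is_f (c : C) : c \is Num.real -> c = f (complex.Re c).
Proof.
case: c => a b; rewrite realE !lecE /= => /orP[] /andP[] /eqP hb _; [by rewrite hb | by rewrite -hb].
Qed.

Lemma rayleigh m (P : 'M[R]_m) (hi : R) : P^T = P ->
  (forall a, eigenvalue P a -> a <= hi) ->
  forall v : 'rV[R]_m, (v *m P *m v^T) 0 0 <= hi * (v *m v^T) 0 0.
Proof.
move=> Psym Pev v.
pose Pc := map_mx f P.
have herm : Pc \is hermsymmx.
  apply: realsym_hermsym.
    by apply/is_hermitianmxP; rewrite expr0 scale1r map_mx_id // /Pc map_trmx Psym.
  by apply/mxOverP => i j; rewrite mxE fR_real.
have /orthomx_spectralP Peq := hermitian_normalmx herm.
set U := spectralmx Pc in Peq; set d := spectral_diag Pc in Peq.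
have Uu : U \is unitarymx := spectral_unitarymx Pc.
have Uunit : U \in unitmx := spectral_unit Pc.
have dreal : d \is a realmx := hermitian_spectral_diag_real herm.
have dle : forall j, d 0 j <= f hi.
  move=> j.
  have ev : eigenvalue Pc (d 0 j).
    apply/eigenvalueP; exists (delta_mx 0 j *m U).
      rewrite {1}Peq !mulmxA mulmxK // -[_ *m diag_mx d]rowE row_diag_mx -scalemxAl //.
    apply/eqP => H; have := congr1 (mulmx^~ (invmx U)) H.
    rewrite /= mulmxK // mul0mx => /matrixP/(_ 0 j); rewrite !mxE !eqxx /=.
    by move/eqP; rewrite oner_eq0.
  have dr : d 0 j \is Num.real by exact: (mxOverP dreal).
  rewrite (real_is_f dr) in ev *.
  by rewrite lecR; apply: Pev; rewrite -(eigenvalue_map f).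
pose vc := map_mx f v.
have vcs : map_mx Num.conj vc^T = map_mx f v^T.
  by apply/matrixP => i j; rewrite !mxE fR_conj.
have e1 : f ((v *m P *m v^T) 0 0) = (vc *m Pc *m map_mx Num.conj vc^T) 0 0.
  by rewrite vcs -!map_mxM [RHS]mxE.
have e2 : f ((v *m v^T) 0 0) = (vc *m map_mx Num.conj vc^T) 0 0.
  by rewrite vcs -!map_mxM [RHS]mxE.
pose z := vc *m map_mx Num.conj U^T.
have zs : map_mx Num.conj z^T = U *m map_mx Num.conj vc^T.
  rewrite /z trmx_mul map_mxM; congr (_ *m _); apply/matrixP => i k; by rewrite !mxE /= conjCK.
have e3 : vc *m Pc *m map_mx Num.conj vc^T = z *m diag_mx d *m map_mx Num.conj z^T.
  by rewrite zs {1}Peq (invmx_unitary Uu) !mulmxA.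
have e4 : vc *m map_mx Num.conj vc^T = z *m map_mx Num.conj z^T.
  rewrite zs /z mulmxA -(mulmxA vc) -(invmx_unitary Uu) mulVmx // mulmx1 //.
rewrite -lecR rmorphM /= e1 e2 e3 e4.
exact: diag_quad_le.
Qed.
End Ray.

Lemma rayleigh_lo (R : realType) m (P : 'M[R]_m) (lo : R) : P^T = P ->
  (forall a, eigenvalue P a -> lo <= a) ->
  forall v : 'rV[R]_m, lo * (v *m v^T) 0 0 <= (v *m P *m v^T) 0 0.
Proof.
move=> Psym Pev v.
have Nsym : (- P)^T = - P by rewrite raddfN /= Psym.
have Nev : forall a, eigenvalue (- P) a -> a <= - lo.
  move=> a /eigenvalueP [u hu un0]; rewrite lerNr; apply: Pev.
  apply/eigenvalueP; exists u => //.
  by rewrite scaleNr -hu mulmxN opprK.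
have := rayleigh Nsym Nev v.
by rewrite mulmxN mulNmx mxE mulNr lerN2.
Qed.

Definition Mx (R : realType) m n (A : 'M[R]_(m, n)) (x : 'cV[R]_n) :=
  A *m diagv x *m diagv x *m A^T.

Lemma SigmaE (R : realType) m n (A : 'M[R]_(m, n)) (x : 'cV[R]_n) :
  Sigma A x = invmx (Mx A x).
Proof. by []. Qed.

Lemma eqle (R : realType) (a b : R) : a = b -> a <= b.
Proof. by move=> ->. Qed.

Unset Implicit Arguments.

Theorem lemma7 (R : realType) (m n : nat) (A : 'M[R]_(m, n))
  (xmin xmax lmax lmin : R) (xo xh xt : 'cV[R]_n) :
  A *m A^T \in unitmx ->
  0 < xmin -> xmin <= xmax ->
  (forall i, xmin <= xo i 0 <= xmax) ->
  (forall i, xmin <= xh i 0 <= xmax) ->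
  (forall i, xmin <= xt i 0 <= xmax) ->
  is_lmax (A *m A^T) lmax -> is_lmin (A *m A^T) lmin ->
  let bound := xmax ^+ 2 * lmax ^+ 2 * inftynorm (sqv xh - sqv xt)
               / (xmin ^+ 4 * lmin ^+ 2) in
  (forall S : 'M[R]_m,
     S^T = S -> psd S -> S *m S = A *m diagv xo *m diagv xo *m A^T ->
     forall lam : R, eigenvalue (S *m (Sigma A xh - Sigma A xt) *m S) lam ->
       `|lam| <= bound) /\
  (forall (sigw : R) (L : nat) (w : 'I_L -> 'cV[R]_n),
     0 < sigw -> (0 < L)%N ->
     `| (L%:R * sigw ^+ 2)^-1 *
        \sum_(l < L) qform (Sigma A xh - Sigma A xt) (A *m diagv xo *m w l) |
     <= bound * (1 + (L%:R * sigw ^+ 2)^-1 * \sum_(l < L) ((w l)^T *m w l) 0 0)).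
Proof.
move=> AAu xmin0 xle hxo hxh hxt [evmax maxP] [evmin minP] bound.
set AA := A *m A^T.
have AAsym : AA^T = AA by rewrite /AA trmx_mul trmxK.
have Rmax : forall v : 'rV_m, (v *m AA *m v^T) 0 0 <= lmax * nrm v.
  exact: rayleigh AAsym maxP.
have Rmin : forall v : 'rV_m, lmin * nrm v <= (v *m AA *m v^T) 0 0.
  exact: rayleigh_lo AAsym minP.
have lmin0 : 0 < lmin.
  have /eigenvalueP [v hv vn0] := evmin.
  have e : lmin * nrm v = nrm (v *m A) by rewrite nrmA -/AA hv -scalemxAl mxE.
  have lge : 0 <= lmin.
    by have := nrm_ge0 (v *m A); rewrite -e pmulr_lge0 // nrm_gt0.
  rewrite lt_def lge andbT; apply/eqP => l0.
  move: hv; rewrite l0 scale0r => hv.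
  move: vn0; have := congr1 (mulmx^~ (invmx AA)) hv; rewrite /= mulmxK // mul0mx => ->.
  by rewrite eqxx.
have lmaxge : lmin <= lmax := maxP _ evmin.
have lmax0 : 0 < lmax := lt_le_trans lmin0 lmaxge.
pose k := xmin ^+ 2 * lmin.
have k0 : 0 < k by rewrite /k mulr_gt0 // exprn_gt0.
have diagvT : forall x : 'cV[R]_n, (diagv x)^T = diagv x.
  by move=> x; rewrite /diagv tr_diag_mx.
have MxT : forall x, (Mx A x)^T = Mx A x.
  by move=> x; rewrite /Mx !trmx_mul trmxK !diagvT !mulmxA.
have sqb : forall x : 'cV[R]_n, (forall i, xmin <= x i 0 <= xmax) -> forall i,
    xmin ^+ 2 <= x i 0 ^+ 2 <= xmax ^+ 2.
  move=> x hx i; have /andP[h1 h2] := hx i.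
  have x0 : 0 <= xmin := ltW xmin0.
  have xi0 : 0 <= x i 0 := le_trans x0 h1.
  by rewrite !ler_sqr ?nnegrE ?h1 ?h2 //; apply: le_trans xi0 h2.
have Mlo : forall x : 'cV[R]_n, (forall i, xmin <= x i 0 <= xmax) -> forall p : 'rV_m,
    k * nrm p <= (p *m Mx A x *m p^T) 0 0.
  move=> x hx p; rewrite quadA.
  apply: le_trans (_ : xmin ^+ 2 * nrm (p *m A) <= _).
    by rewrite /k -mulrA ler_wpM2l ?sqr_ge0 // nrmA; exact: Rmin.
  rewrite nrmE mulr_sumr; apply: ler_sum => j _.
  have /andP[l _] := sqb x hx j.
  rewrite (_ : _ * _ * _ = x j 0 ^+ 2 * (p *m A) 0 j ^+ 2); last by ring.
  by apply: ler_wpM2r; [exact: sqr_ge0 | exact: l].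
have Mhi : forall x : 'cV[R]_n, (forall i, xmin <= x i 0 <= xmax) -> forall p : 'rV_m,
    (p *m Mx A x *m p^T) 0 0 <= xmax ^+ 2 * lmax * nrm p.
  move=> x hx p; rewrite quadA.
  apply: le_trans (_ : xmax ^+ 2 * nrm (p *m A) <= _); last first.
    by rewrite -mulrA ler_wpM2l ?sqr_ge0 // nrmA; exact: Rmax.
  rewrite nrmE mulr_sumr; apply: ler_sum => j _.
  have /andP[_ l] := sqb x hx j.
  rewrite (_ : _ * _ * _ = x j 0 ^+ 2 * (p *m A) 0 j ^+ 2); last by ring.
  by apply: ler_wpM2r; [exact: sqr_ge0 | exact: l].
have Munit : forall x : 'cV[R]_n, (forall i, xmin <= x i 0 <= xmax) -> Mx A x \in unitmx.
  move=> x hx; case: (boolP (Mx A x \in unitmx)) => // nu; exfalso.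
  have Kn0 : kermx (Mx A x) != 0 by rewrite kermx_eq0 row_free_unit.
  have : [exists i, row i (kermx (Mx A x)) != 0].
    apply: contraR Kn0 => /existsPn H; apply/eqP/row_matrixP => i; rewrite row0.
    by apply/eqP; move: (H i); rewrite negbK.
  case/existsP => i ri.
  have hv : row i (kermx (Mx A x)) *m Mx A x = 0.
    by apply/sub_kermxP; exact: row_sub.
  have := Mlo x hx (row i (kermx (Mx A x))); rewrite hv mul0mx mxE.
  by rewrite lt_geF // mulr_gt0 // nrm_gt0.
have Sinv : forall x : 'cV[R]_n, (forall i, xmin <= x i 0 <= xmax) -> forall u : 'rV_m,
    nrm (u *m invmx (Mx A x)) <= nrm u / k ^+ 2.
  move=> x hx u; set p := u *m invmx (Mx A x).
  have h1 := Mlo x hx p.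
  have e : (p *m Mx A x *m p^T) 0 0 = (u *m p^T) 0 0 by rewrite /p mulmxKV ?Munit.
  have k0' : 0 < k^-1 by rewrite invr_gt0.
  have h2 := amgm u p k0'; rewrite invrK in h2.
  have h3 : k * nrm p <= k^-1 * nrm u.
    rewrite e in h1; rewrite [nrm p * k]mulrC in h2; lra.
  rewrite ler_pdivlMr ?exprn_gt0 //.
  have := ler_wpM2l (ltW k0) h3; rewrite !mulrA mulfV ?gt_eqF // mul1r.
  by move=> H; apply: le_trans H; apply: eqle; rewrite /k; ring.
set dl := inftynorm (sqv xh - sqv xt).
have edl : forall j, `|xt j 0 ^+ 2 - xh j 0 ^+ 2| <= dl.
  move=> j; rewrite distrC.
  apply: le_trans (le_bigmax 0 (fun i => `|(sqv xh - sqv xt) i 0|) j).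
  by rewrite !mxE.
have dl0 : 0 <= dl.
  rewrite /dl /inftynorm; apply: (big_ind (fun x : R => 0 <= x)) => //.
  by move=> a b ha hb; rewrite le_max ha.
have core : forall u : 'rV_m,
    `|(u *m (Sigma A xh - Sigma A xt) *m u^T) 0 0| <= dl * lmax / k ^+ 2 * nrm u.
  move=> u; rewrite !SigmaE.
  set Sh := invmx (Mx A xh); set St := invmx (Mx A xt).
  have eD : Sh - St = Sh *m (Mx A xt - Mx A xh) *m St.
    rewrite mulmxBr mulmxBl /Sh mulVmx ?Munit // mul1mx -mulmxA mulmxV ?Munit //.
    by rewrite mulmx1; reflexivity.
  have StT : St^T = St by rewrite /St trmx_inv MxT.
  set p := u *m Sh; set q := u *m St.
  have e2 : (u *m (Sh - St) *m u^T) 0 0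
      = (p *m Mx A xt *m q^T) 0 0 - (p *m Mx A xh *m q^T) 0 0.
    rewrite eD /p /q trmx_mul StT mulmxBr mulmxBl !mulmxA.
    by rewrite mulmxBr mulmxBl !mulmxA [LHS]mxE [X in _ + X]mxE.
  rewrite e2 !quadA -sumrB.
  rewrite (eq_bigr (fun j => (p *m A) 0 j * (xt j 0 ^+ 2 - xh j 0 ^+ 2) * (q *m A) 0 j)); last first.
    by move=> j _; ring.
  apply: le_trans (bil_bound (p *m A) (q *m A) edl) _.
  have hp : nrm (p *m A) <= lmax * (nrm u / k ^+ 2).
    rewrite nrmA; apply: le_trans (Rmax p) _; apply: ler_wpM2l; first exact: ltW.
    exact: Sinv.
  have hq : nrm (q *m A) <= lmax * (nrm u / k ^+ 2).
    rewrite nrmA; apply: le_trans (Rmax q) _; apply: ler_wpM2l; first exact: ltW.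
    exact: Sinv.
  apply: le_trans (_ : dl / 2 * (lmax * (nrm u / k ^+ 2) + lmax * (nrm u / k ^+ 2)) <= _).
    apply: ler_wpM2l; first by apply: divr_ge0.
    exact: lerD.
  by apply: eqle; field; rewrite gt_eqF.
have hbound : bound = dl * lmax / k ^+ 2 * (xmax ^+ 2 * lmax).
  rewrite /bound /k -/dl; field.
  by rewrite !gt_eqF // exprn_gt0.
have bound0 : 0 <= bound.
  rewrite hbound; apply: mulr_ge0; last by apply: mulr_ge0; [exact: sqr_ge0 | exact: ltW].
  apply: divr_ge0; last exact: exprn_ge0 (ltW k0).
  by apply: mulr_ge0 => //; exact: ltW.
split.
  move=> S Ssym _ SS lam /eigenvalueP [v hv vn0].
  set u := v *m S.
  have e : lam * nrm v = (u *m (Sigma A xh - Sigma A xt) *m u^T) 0 0.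
    have -> : u *m (Sigma A xh - Sigma A xt) *m u^T
        = v *m (S *m (Sigma A xh - Sigma A xt) *m S) *m v^T.
      by rewrite /u trmx_mul Ssym !mulmxA.
    by rewrite hv -scalemxAl mxE.
  have hu : nrm u <= xmax ^+ 2 * lmax * nrm v.
    have -> : nrm u = (v *m Mx A xo *m v^T) 0 0.
      by rewrite /nrm /u trmx_mul Ssym !mulmxA -(mulmxA v S S) SS /Mx !mulmxA.
    exact: Mhi.
  have := core u; rewrite -e normrM (ger0_norm (nrm_ge0 v)) => h.
  rewrite -(ler_pM2r (nrm_gt0 vn0)).
  apply: le_trans h _.
  rewrite hbound -[X in _ <= X]mulrA; apply: ler_wpM2l; last exact: hu.
  apply: divr_ge0; last exact: exprn_ge0 (ltW k0).
  by apply: mulr_ge0 => //; exact: ltW.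
move=> sigw L w sig0 L0.
set c0 := (L%:R * sigw ^+ 2)^-1.
have c00 : 0 < c0 by rewrite /c0 invr_gt0 mulr_gt0 ?exprn_gt0 // ltr0n.
have trick : forall z : 'cV[R]_n, nrm (A *m z)^T <= lmax * nrm z^T.
  move=> z; set r := (A *m z)^T.
  have e : nrm r = ((r *m A) *m (z^T)^T) 0 0 by rewrite /nrm {2}/r !trmxK -mulmxA.
  have lm0' : 0 < lmax^-1 by rewrite invr_gt0.
  have h := amgm (r *m A) z^T lm0'; rewrite invrK -e in h.
  have h2 : nrm (r *m A) <= lmax * nrm r by rewrite nrmA; exact: Rmax.
  have h3 : lmax^-1 * nrm (r *m A) <= nrm r.
    rewrite -(ler_pM2l lmax0) mulrA mulfV ?gt_eqF // mul1r; exact: h2.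
  rewrite [nrm z^T * lmax]mulrC in h; lra.
have each : forall l, `|qform (Sigma A xh - Sigma A xt) (A *m diagv xo *m w l)|
    <= bound * ((w l)^T *m w l) 0 0.
  move=> l; set z := diagv xo *m w l.
  have ey : A *m diagv xo *m w l = A *m z by rewrite /z mulmxA.
  rewrite /qform ey -{2}(trmxK (A *m z)).
  apply: le_trans (core _) _.
  have hz : nrm z^T <= xmax ^+ 2 * nrm (w l)^T.
    rewrite /nrm trmxK {1}/z trmx_mul diagvT trmx_mul diagvT mulmxA quad_diag.
    have -> : (w l)^T *m w l = (w l)^T *m ((w l)^T)^T by rewrite trmxK.
    rewrite dotE mulr_sumr; apply: ler_sum => j _.
    have /andP[_ l2] := sqb xo hxo j.
    rewrite (_ : _ * _ * _ = xo j 0 ^+ 2 * ((w l)^T 0 j * (w l)^T 0 j)); last by ring.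
    apply: ler_wpM2r => //; rewrite -expr2; exact: sqr_ge0.
  have cge : 0 <= dl * lmax / k ^+ 2.
    apply: divr_ge0; last exact: exprn_ge0 (ltW k0).
    by apply: mulr_ge0 => //; exact: ltW.
  have en : ((w l)^T *m w l) 0 0 = nrm (w l)^T by rewrite /nrm trmxK.
  apply: le_trans (_ : dl * lmax / k ^+ 2 * (lmax * (xmax ^+ 2 * nrm (w l)^T)) <= _).
    apply: ler_wpM2l => //; apply: le_trans (trick z) _.
    by apply: ler_wpM2l; [exact: ltW | exact: hz].
  by apply: eqle; rewrite en hbound; ring.
rewrite normrM (gtr0_norm c00).
apply: le_trans (_ : c0 * (bound * \sum_(l < L) ((w l)^T *m w l) 0 0) <= _).
  apply: ler_wpM2l; first exact: ltW.
  apply: le_trans (ler_norm_sum _ _ _) _; rewrite mulr_sumr.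
  by apply: ler_sum => l _; exact: each.
rewrite mulrDr mulr1 [c0 * _]mulrCA lerDr.
exact: bound0.
Qed.
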